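(* Let $n_1>n_2>n_3$ be pairwise coprime positive integers forming a minimal system of generators of $\mathcal S=\langle n_1,n_2,n_3\rangle$. Define $$C_1=\min_{\alpha=1,\dots,I_1}\left\{\alpha n_2-[-n_3n_1^{-1}]_{n_2}\left\lfloor\frac{\alpha n_1}{[n_3n_2^{-1}]_{n_1}}\right\rfloor\right\},\quad C_2=\min_{\beta=1,\dots,I_2}\left\{\beta n_1-[-n_3n_2^{-1}]_{n_1}\left\lfloor\frac{\beta n_2}{[n_3n_1^{-1}]_{n_2}}\right\rfloor\right\},$$ $$C_3=\min_{\gamma=1,\dots,I_3}\left\{\gamma n_1-[-n_2n_3^{-1}]_{n_1}\left\lfloor\frac{\gamma n_3}{[n_2n_1^{-1}]_{n_3}}\right\rfloor\right\},$$ where $I_1=\left\lceil [-n_3n_1^{-1}]_{n_2}\frac{[n_3n_2^{-1}]_{n_1}}{n_3}\right\rceil$, $I_2=\left\lceil [-n_3n_2^{-1}]_{n_1}\frac{[n_3n_1^{-1}]_{n_2}}{n_3}\right\rceil$, $I_3=\left\lceil [-n_2n_3^{-1}]_{n_1}\frac{[n_2n_1^{-1}]_{n_3}}{n_2}\right\rceil$. Then the Frobenius number of $\mathcal S$ is $$F(\mathcal S)=C_1n_1+\max\left\{[C_2n_2n_3^{-1}]_{n_1}\,n_3,\ [C_3n_3n_2^{-1}]_{n_1}\,n_2\right\}-n_1-n_2-n_3 .$$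
   Context: $\mathbb N$ denotes the nonnegative integers. For integers $a_1,\dots,a_r$, $\langle a_1,\dots,a_r\rangle=\{\sum t_la_l: t_l\in\mathbb N\}$. Minimal system of generators means that no $n_l$ belongs to the monoid generated by the other two. The Frobenius number $F(\mathcal S)$ is the largest integer not in $\mathcal S$. For an integer $m$ and $n\ge 1$, $[m]_n\in\{0,\dots,n-1\}$ denotes the remainder of $m$ upon division by $n$; for $a$ coprime to $n$, the symbol $a^{-1}$ inside $[\cdot]_n$ denotes a multiplicative inverse of $a$ modulo $n$ (so e.g. $[C_2n_2n_3^{-1}]_{n_1}$ is the remainder modulo $n_1$ of $C_2n_2$ times an inverse of $n_3$ modulo $n_1$). *)

(* Defs.v *)
From HB Require Import structures.
From mathcomp Require Import all_boot all_order all_algebra.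
Set Implicit Arguments. Unset Strict Implicit. Unset Printing Implicit Defensive.
Import Order.TTheory GRing.Theory Num.Theory.
Local Open Scope ring_scope.

Definition inS3 (a1 a2 a3 : nat) (m : int) : Prop :=
  exists t1 t2 t3 : nat, m = (t1 * a1 + t2 * a2 + t3 * a3)%N%:Z.

Definition inS2 (a1 a2 : nat) (m : int) : Prop :=
  exists t1 t2 : nat, m = (t1 * a1 + t2 * a2)%N%:Z.

(* a multiplicative inverse of a modulo n (a Bezout coefficient);
   it is an inverse whenever a and n are coprime *)
Definition minv (a n : int) : int := (egcdz a n).1.

(* [c * a^{-1}]_n : remainder mod n of c times an inverse of a mod n *)
Definition resinv (c a n : int) : int := ((c * minv a n) %% n)%Z.

Definition ceilz (x y : int) : int := - ((- x) %/ y)%Z.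

Definition minOver (I : nat) (f : nat -> int) : int :=
  foldr (fun k m => Num.min (f k) m) (f 1%N) (iota 1 I).

Definition is_frobenius (n1 n2 n3 : nat) (F : int) : Prop :=
  ~ inS3 n1 n2 n3 F /\ forall m : int, F < m -> inS3 n1 n2 n3 m.

(* Main.v *)
Require Import Defs.
From HB Require Import structures.
From mathcomp Require Import all_boot all_order all_algebra.
From mathcomp Require Import zify ring lra.
Import Order.TTheory GRing.Theory Num.Theory.
Local Open Scope ring_scope.

Lemma resinv_spec (c a n : int) : 0 < n -> coprimez a n ->
  0 <= resinv c a n < n /\ exists q : int, resinv c a n * a - c = q * n.
Proof.
move=> n0 co.
have g1 : gcdz a n = 1 by apply/eqP.
rewrite /resinv /minv.
case: (egcdzP a n) => u v /= Huv _.
rewrite g1 in Huv.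
have hn : n != 0 by rewrite gt_eqF.
split. by rewrite modz_ge0 // ltz_pmod.
rewrite /modz.
exists (- c * v - (c * u %/ n)%Z * a).
have -> : (c * u - (c * u %/ n)%Z * n) * a - c = c * (u * a - 1) - (c * u %/ n)%Z * n * a by ring.
rewrite (_ : u * a - 1 = - (v * n)); last by rewrite -Huv; ring.
ring.
Qed.

Lemma minOver_le (I : nat) (f : nat -> int) k : (1 <= k <= I)%N -> minOver I f <= f k.
Proof.
rewrite /minOver; move=> Hk.
have : k \in iota 1 I by rewrite mem_iota; lia.
elim: (iota 1 I) => [//|h t IH]; rewrite inE /= => /orP[/eqP->|/IH H].
  by rewrite ge_min lexx.
by rewrite ge_min H orbT.
Qed.

Lemma minOver_le1 (I : nat) (f : nat -> int) : minOver I f <= f 1%N.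
Proof.
rewrite /minOver; elim: (iota 1 I) => [//|h t IH] /=.
by rewrite ge_min IH orbT.
Qed.

Lemma minOver_mem (I : nat) (f : nat -> int) : exists k, (1 <= k)%N /\ (k <= I \/ k = 1)%N /\ minOver I f = f k.
Proof.
rewrite /minOver.
suff : exists k, (k = 1%N \/ k \in iota 1 I) /\ foldr (fun k m => Num.min (f k) m) (f 1%N) (iota 1 I) = f k.
  move=> [k [Hk E]]; exists k; split; last split => //.
  - by case: Hk => [->//|]; rewrite mem_iota; lia.
  - by case: Hk => [->|]; [right|rewrite mem_iota; left; lia].
elim: (iota 1 I) => [|h t [k [Hk E]]] /=; first by exists 1%N; split => //; left.
case: (leP (f h) (foldr (fun (j : nat) (m : int) => Num.min (f j) m) (f 1%N) t)) => H.
- exists h; split; first by right; rewrite inE eqxx.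
  by [].
- exists k; split; first by case: Hk => [->|Hk]; [left|right; rewrite inE Hk orbT].
  by [].
Qed.

Definition mem2 (p q k : nat) : Prop := exists x y : nat, k = (x * p + y * q)%N.
Definition minimal (a b c ci : nat) : Prop :=
  (0 < ci)%N /\ mem2 b c (ci * a) /\
  forall c' : nat, (0 < c')%N -> mem2 b c (c' * a) -> (ci <= c')%N.

Lemma coprimez_nat (a b : nat) : coprime a b -> coprimez a%:Z b%:Z.
Proof. by rewrite coprimezE. Qed.

Lemma partA (a b c : nat) : (1 < a)%N -> (0 < c)%N -> (c < b)%N -> (c < a + b)%N ->
  coprime a b -> coprime a c -> coprime b c ->
  exists ci : nat,
    minOver `|ceilz (resinv (- c%:Z) a%:Z b%:Z * resinv c%:Z b%:Z a%:Z) c%:Z|%N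
      (fun m => m%:Z * b%:Z - resinv (- c%:Z) a%:Z b%:Z * ((m%:Z * a%:Z) %/ resinv c%:Z b%:Z a%:Z)%Z)
    = ci%:Z /\ minimal a b c ci.
Proof.
move=> a1 c0 cb cab cab' cac cbc.
set u := resinv (- c%:Z) a%:Z b%:Z.
set v := resinv c%:Z b%:Z a%:Z.
have [/andP[u0 ub] [qu Hu]] : (0 <= u < b%:Z) /\ exists q : int, u * a%:Z - (- c%:Z) = q * b%:Z.
  by apply: resinv_spec; [lia | apply: coprimez_nat].
have [/andP[v0 vb] [qv Hv]] : (0 <= v < a%:Z) /\ exists q : int, v * b%:Z - c%:Z = q * a%:Z.
  by apply: resinv_spec; [lia | apply: coprimez_nat; rewrite coprime_sym].
have a0 : (0 < a%:Z) by lia.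
have b0 : (0 < b%:Z) by lia.
have v1 : 0 < v.
  rewrite lt_neqAle v0 andbT; apply/negP => /eqP v_0.
  have : (a %| c)%N.
    rewrite -(dvdzE a%:Z c%:Z); apply/dvdzP; exists (- qv).
    rewrite -v_0 in Hv; lia.
  move=> /gcdn_idPl H; move: cac; rewrite /coprime H => /eqP E; by rewrite E in a1.
have Hq : qu = v.
  have : (a%:Z %| (qu - v) * b%:Z)%Z.
    apply/dvdzP; exists (u - qv); lia.
  rewrite Gauss_dvdzl; last exact: coprimez_nat.
  move=> /dvdzP [k Hk].
  have qub : qu * b%:Z < (a%:Z + 1) * b%:Z by nia.
  have qua : qu <= a%:Z by nia.
  have qu0 : 0 < qu by nia.
  have : k = 0 by nia.
  move=> k0; rewrite k0 mul0r in Hk; lia.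
rewrite Hq in Hu.
have u1 : 0 < u by nia.
set g := fun m : nat => m%:Z * b%:Z - u * ((m%:Z * a%:Z) %/ v)%Z.
have vn0 : v != 0 by rewrite gt_eqF.
have Hg : forall m : nat, (0 < m)%N ->
   0 < g m /\ g m * a%:Z = ((m%:Z * a%:Z) %% v)%Z * b%:Z + ((m%:Z * a%:Z) %/ v)%Z * c%:Z
   /\ v * g m = m%:Z * c%:Z + u * ((m%:Z * a%:Z) %% v)%Z.
  move=> m m0; rewrite /g.
  have E := divz_eq (m%:Z * a%:Z) v.
  have s0 := modz_ge0 (m%:Z * a%:Z) vn0.
  have sv := ltz_pmod (m%:Z * a%:Z) v1.
  have q0 : 0 <= ((m%:Z * a%:Z) %/ v)%Z by rewrite divz_ge0 //; lia.
  move: E s0 sv q0.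
  set q := ((m%:Z * a%:Z) %/ v)%Z; set s := ((m%:Z * a%:Z) %% v)%Z => E s0 sv q0.
  have E1 : (m%:Z * b%:Z - u * q) * a%:Z = s * b%:Z + q * c%:Z.
    have := congr1 (fun t => t * q) Hu; have := congr1 (fun t => t * b%:Z) E.
    move=> h1 h2; lia.
  have E2 : v * (m%:Z * b%:Z - u * q) = m%:Z * c%:Z + u * s.
    have := congr1 (fun t => t * m%:Z) Hu; have := congr1 (fun t => t * u) E.
    move=> h1 h2; lia.
  split; last by split.
  have : 0 < (m%:Z * b%:Z - u * q) * a%:Z by rewrite E1; nia.
  nia.
set I := `|ceilz (u * v) c%:Z|%N.
have HI : u * v <= I%:Z * c%:Z.
  rewrite /I /ceilz.
  have c0' : c%:Z != 0 by rewrite gt_eqF //; lia.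
  have F1 := lez_floor (- (u * v)) c0'.
  have F2 : ((- (u * v)) %/ c%:Z)%Z <= 0 by nia.
  rewrite gez0_abs; lia.
have A3 : forall m : nat, (I < m)%N -> g 1%N < g m.
  move=> m mI.
  have [_ [_ E1]] := Hg 1%N isT.
  have [_ [_ Em]] := Hg m ltac:(lia).
  have s1 := ltz_pmod (1%:Z * a%:Z) v1.
  have sm := modz_ge0 (m%:Z * a%:Z) vn0.
  have : v * g 1%N < v * g m by rewrite E1 Em; nia.
  nia.
have A4 : forall c' : nat, (0 < c')%N -> mem2 b c (c' * a) ->
    exists m : nat, (0 < m)%N /\ g m <= c'%:Z.
  move=> c' c'0 [x [y Hxy]].
  have Hxy' : c'%:Z * a%:Z = x%:Z * b%:Z + y%:Z * c%:Z by lia.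
  have E : (x%:Z + y%:Z * v) * b%:Z = (c'%:Z + y%:Z * u) * a%:Z.
    have := congr1 (fun t => t * y%:Z) Hu; move=> h; lia.
  have : (a%:Z %| (x%:Z + y%:Z * v) * b%:Z)%Z by apply/dvdzP; exists (c'%:Z + y%:Z * u); lia.
  rewrite Gauss_dvdzl; last exact: coprimez_nat.
  move=> /dvdzP [m Hm].
  have m0 : 0 < m.
    have : 0 < x%:Z + y%:Z * v.
      case: (posnP x) => [x0|x0]; last by nia.
      case: (posnP y) => [y0|y0]; last by nia.
      rewrite x0 y0 in Hxy; lia.
    nia.
  have Hmb : m * b%:Z = c'%:Z + y%:Z * u.
    apply: (@mulIf _ a%:Z); first by rewrite gt_eqF.
    rewrite -E Hm; ring.
  exists `|m|%N; split; first lia.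
  rewrite /g gez0_abs; last lia.
  have : y%:Z <= ((m * a%:Z) %/ v)%Z.
    by rewrite lez_divRL // -Hm; nia.
  nia.
have [m0 [m01 [m0I Em0]]] := minOver_mem I g.
have [gp [Ga _]] := Hg m0 m01.
have Cle : forall c' : nat, (0 < c')%N -> mem2 b c (c' * a) -> minOver I g <= c'%:Z.
  move=> c' c'0 Hc'; have [m [m1 Hm]] := A4 c' c'0 Hc'.
  case: (leqP m I) => mI.
    by apply: le_trans Hm; apply: minOver_le; lia.
  apply: le_trans Hm; apply: le_trans (minOver_le1 I g) _; apply: ltW; exact: A3.
exists `|minOver I g|%N.
have C0 : 0 < minOver I g by rewrite Em0.
split; first by rewrite gez0_abs // ltW.
split; first lia.
split.
  have s0 := modz_ge0 (m0%:Z * a%:Z) vn0.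
  have q0 : 0 <= ((m0%:Z * a%:Z) %/ v)%Z by rewrite divz_ge0 //; lia.
  exists `|((m0%:Z * a%:Z) %% v)%Z|%N, `|((m0%:Z * a%:Z) %/ v)%Z|%N.
  apply/eqP; rewrite -eqz_nat; apply/eqP.
  rewrite PoszD !PoszM (gez0_abs (ltW C0)) !gez0_abs //.
  by rewrite Em0 Ga.
move=> c' c'0 Hc'.
have := Cle c' c'0 Hc'.
rewrite -lez_nat gez0_abs // ?ltW //.
Qed.

Lemma min_int (a b c ci : nat) (k x y : int) : minimal a b c ci ->
  0 < k -> 0 <= x -> 0 <= y -> k * a%:Z = x * b%:Z + y * c%:Z -> ci%:Z <= k.
Proof.
move=> [_ [_ H]] k0 x0 y0 E.
have := H `|k|%N ltac:(lia).
have : mem2 b c (`|k| * a)%N.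
  exists `|x|%N, `|y|%N; lia.
move=> h1 h2; have := h2 h1; lia.
Qed.

Lemma minimal_sym a b c ci : minimal a b c ci -> minimal a c b ci.
Proof.
move=> [h1 [[x [y E]] h3]]; split => //; split; first by exists y, x; lia.
move=> c' c'0 [x' [y' E']]; apply: h3 => //; exists y', x'; lia.
Qed.

Lemma minimal_rel a b c ci : minimal a b c ci ->
  exists x y : nat, (ci%:Z * a%:Z = x%:Z * b%:Z + y%:Z * c%:Z).
Proof. move=> [_ [[x [y E]] _]]; exists x, y; lia. Qed.

Lemma pos_r (ni nj nk ci rij rik : nat) : (0 < nk)%N -> coprime ni nk ->
  ~ mem2 ni nk nj -> minimal ni nj nk ci ->
  ci%:Z * ni%:Z = rij%:Z * nj%:Z + rik%:Z * nk%:Z -> (0 < rij)%N.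
Proof.
move=> nk0 co nm Hm E.
case: (posnP rij) => // r0; exfalso.
have ci0 : (0 < ci)%N by case: Hm.
have : (nk %| ci * ni)%N by apply/dvdnP; exists rik; rewrite r0 in E; lia.
rewrite Gauss_dvdl; last by rewrite coprime_sym.
move=> /(dvdn_leq ci0) nkci.
have [/andP [k0 kb] [q Hq]] := @resinv_spec nj%:Z ni%:Z nk%:Z ltac:(lia) (@coprimez_nat _ _ co).
move: k0 kb Hq; set k := resinv _ _ _ => k0 kb Hq.
case: (lerP q 0) => q0.
  have [kn Ek] : exists kn : nat, k = kn%:Z by exists `|k|%N; lia.
  have [qn Eq] : exists qn : nat, q = - qn%:Z by exists `|q|%N; lia.
  rewrite Ek Eq in Hq.
  apply: nm; exists kn, qn; lia.
have := @min_int ni nj nk ci k 1 q Hm ltac:(nia) ltac:(lia) ltac:(lia) ltac:(lia).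
lia.
Qed.

Lemma lt_r (ni nj nk ci cj rij rik rji rjk : nat) : minimal ni nj nk ci ->
  ci%:Z * ni%:Z = rij%:Z * nj%:Z + rik%:Z * nk%:Z ->
  cj%:Z * nj%:Z = rji%:Z * ni%:Z + rjk%:Z * nk%:Z ->
  (0 < rji)%N -> (0 < rik)%N -> (0 < nk)%N -> (rij < cj)%N.
Proof.
move=> Hm Ei Ej rji0 rik0 nk0.
case: (ltnP rij cj) => // H; exfalso.
have E : (ci%:Z - rji%:Z) * ni%:Z = (rij%:Z - cj%:Z) * nj%:Z + (rik%:Z + rjk%:Z) * nk%:Z.
  lia.
have h : 0 < (ci%:Z - rji%:Z) * ni%:Z by rewrite E; nia.
have h' : 0 < ci%:Z - rji%:Z by nia.
have := @min_int ni nj nk ci _ (rij%:Z - cj%:Z) (rik%:Z + rjk%:Z) Hm h' ltac:(lia) ltac:(lia) E.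
lia.
Qed.

Lemma sum_le (ni nj nk ci cj ck rij rik rkj rki : nat) : minimal nj ni nk cj ->
  ci%:Z * ni%:Z = rij%:Z * nj%:Z + rik%:Z * nk%:Z ->
  ck%:Z * nk%:Z = rki%:Z * ni%:Z + rkj%:Z * nj%:Z ->
  (rki < ci)%N -> (rik < ck)%N -> (0 < ni)%N -> (cj <= rij + rkj)%N.
Proof.
move=> Hm Ei Ek h1 h2 ni0.
have E : (rij%:Z + rkj%:Z) * nj%:Z = (ci%:Z - rki%:Z) * ni%:Z + (ck%:Z - rik%:Z) * nk%:Z by lia.
have h : 0 < (rij%:Z + rkj%:Z) * nj%:Z by rewrite E; nia.
have h' : 0 < rij%:Z + rkj%:Z by nia.
have := @min_int nj ni nk cj _ (ci%:Z - rki%:Z) (ck%:Z - rik%:Z) Hm h' ltac:(lia) ltac:(lia) E.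
lia.
Qed.

Lemma notin (n1 p q c1 cp cq rp rq : nat) : minimal n1 p q c1 -> minimal p n1 q cp ->
  minimal q n1 p cq ->
  c1%:Z * n1%:Z = rp%:Z * p%:Z + rq%:Z * q%:Z -> (rq < cq)%N -> (0 < n1)%N ->
  (0 < p)%N -> (0 < q)%N -> forall a b d : nat, (cp%:Z - 1) * p%:Z + (rq%:Z - 1) * q%:Z - n1%:Z <>
     a%:Z * n1%:Z + b%:Z * p%:Z + d%:Z * q%:Z.
Proof.
move=> M1 Mp Mq E1 rqcq n10 p0 q0 a b d E.
set A : int := a%:Z + 1.
set X : int := cp%:Z - 1 - b%:Z.
set Y : int := rq%:Z - 1 - d%:Z.
have E2 : A * n1%:Z = X * p%:Z + Y * q%:Z by rewrite /A /X /Y; lia.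
have A0 : 0 < A by rewrite /A; lia.
have Xc : X <= cp%:Z - 1 by rewrite /X; lia.
have Yc : Y <= rq%:Z - 1 by rewrite /Y; lia.
clearbody A X Y.
have An : 0 < A * n1%:Z by nia.
case: (lerP 0 X) => X0; case: (lerP 0 Y) => Y0.
- have h1 := @min_int n1 p q c1 A X Y M1 A0 X0 Y0 E2.
  have E3 : (X - rp%:Z) * p%:Z = (A - c1%:Z) * n1%:Z + (rq%:Z - Y) * q%:Z by lia.
  have : 0 < (X - rp%:Z) * p%:Z by rewrite E3; nia.
  move=> h; have h' : 0 < X - rp%:Z by nia.
  have := @min_int p n1 q cp _ (A - c1%:Z) (rq%:Z - Y) Mp h' ltac:(lia) ltac:(lia) E3.
  lia.
- have E3 : X * p%:Z = A * n1%:Z + (- Y) * q%:Z by lia.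
  have : 0 < X * p%:Z by rewrite E3; nia.
  move=> h; have h' : 0 < X by nia.
  have := @min_int p n1 q cp _ A (- Y) Mp h' ltac:(lia) ltac:(lia) E3.
  lia.
- have E3 : Y * q%:Z = A * n1%:Z + (- X) * p%:Z by lia.
  have : 0 < Y * q%:Z by rewrite E3; nia.
  move=> h; have h' : 0 < Y by nia.
  have := @min_int q n1 p cq _ A (- X) Mq h' ltac:(lia) ltac:(lia) E3.
  lia.
- nia.
Qed.

Lemma region (n1 n2 n3 c2 c3 r12 r13 x y : nat) (t m : int) :
  (x < c2)%N -> (y < c3)%N -> (x < r12 \/ y < r13)%N ->
  m = t * n1%:Z + x%:Z * n2%:Z + y%:Z * n3%:Z ->
  (c2%:Z - 1) * n2%:Z + (r13%:Z - 1) * n3%:Z - n1%:Z < m ->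
  (r12%:Z - 1) * n2%:Z + (c3%:Z - 1) * n3%:Z - n1%:Z < m -> inS3 n1 n2 n3 m.
Proof.
move=> xc yc xy Em h1 h2.
case: (lerP 0 t) => t0.
  exists `|t|%N, x, y.
  have [tn Et] : exists tn : nat, t = tn%:Z by exists `|t|%N; lia.
  rewrite Em Et; lia.
exfalso.
case: xy => h.
- have : x%:Z * n2%:Z <= (r12%:Z - 1) * n2%:Z by apply: ler_wpM2r; lia.
  have : y%:Z * n3%:Z <= (c3%:Z - 1) * n3%:Z by apply: ler_wpM2r; lia.
  have : t * n1%:Z <= - n1%:Z by nia.
  lia.
- have : x%:Z * n2%:Z <= (c2%:Z - 1) * n2%:Z by apply: ler_wpM2r; lia.
  have : y%:Z * n3%:Z <= (r13%:Z - 1) * n3%:Z by apply: ler_wpM2r; lia.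
  have : t * n1%:Z <= - n1%:Z by nia.
  lia.
Qed.

Lemma above (n1 n2 n3 c1 c2 c3 r12 r13 r21 r23 r31 r32 : nat) (m : int) :
  (0 < n1)%N -> coprime n2 n1 ->
  c1%:Z * n1%:Z = r12%:Z * n2%:Z + r13%:Z * n3%:Z ->
  c2%:Z * n2%:Z = r21%:Z * n1%:Z + r23%:Z * n3%:Z ->
  c3%:Z * n3%:Z = r31%:Z * n1%:Z + r32%:Z * n2%:Z ->
  (0 < r21)%N -> (0 < r31)%N -> (0 < c1)%N ->
  (c2%:Z - 1) * n2%:Z + (r13%:Z - 1) * n3%:Z - n1%:Z < m ->
  (r12%:Z - 1) * n2%:Z + (c3%:Z - 1) * n3%:Z - n1%:Z < m -> inS3 n1 n2 n3 m.
Proof.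
move=> n10 co E1 E2 E3 r210 r310 c10 h1 h2.
have key : forall N x y (t : int), (x * n2 + y * n3)%N = N ->
    m = t * n1%:Z + x%:Z * n2%:Z + y%:Z * n3%:Z -> inS3 n1 n2 n3 m.
  elim/ltn_ind => N IH x y t HN Em.
  case: (leqP c2 x) => hx.
    have [x' Ex] : exists x', x = (c2 + x')%N by exists (x - c2)%N; lia.
    apply: (IH (x' * n2 + (y + r23) * n3)%N _ x' (y + r23)%N (t + r21%:Z)) => //.
      rewrite -HN Ex; nia.
    rewrite Em Ex; lia.
  case: (leqP c3 y) => hy.
    have [y' Ey] : exists y', y = (c3 + y')%N by exists (y - c3)%N; lia.
    apply: (IH ((x + r32) * n2 + y' * n3)%N _ (x + r32)%N y' (t + r31%:Z)) => //.
      rewrite -HN Ey; nia.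
    rewrite Em Ey; lia.
  case: (leqP r12 x) => hx'; case: (leqP r13 y) => hy'.
  - have [x' Ex] : exists x', x = (r12 + x')%N by exists (x - r12)%N; lia.
    have [y' Ey] : exists y', y = (r13 + y')%N by exists (y - r13)%N; lia.
    apply: (IH (x' * n2 + y' * n3)%N _ x' y' (t + c1%:Z)) => //.
      rewrite -HN Ex Ey; nia.
    rewrite Em Ex Ey; lia.
  - by apply: (@region n1 n2 n3 c2 c3 r12 r13 x y t) => //; right.
  - by apply: (@region n1 n2 n3 c2 c3 r12 r13 x y t) => //; left.
  - by apply: (@region n1 n2 n3 c2 c3 r12 r13 x y t) => //; left.
have [/andP [x0 xb] [q Hq]] := @resinv_spec m n2%:Z n1%:Z ltac:(lia) (@coprimez_nat _ _ co).
move: x0 xb Hq; set x := resinv _ _ _ => x0 xb Hq.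
have [xn Ex] : exists xn : nat, x = xn%:Z by exists `|x|%N; lia.
apply: (key _ xn 0%N (- q) erefl).
rewrite -Ex; lia.
Qed.

Lemma resinv_eq (c a n r : int) : 0 < n -> coprimez a n -> 0 <= r < n ->
  (exists k : int, r * a - c = k * n) -> resinv c a n = r.
Proof.
move=> n0 co /andP [r0 rn] [k Hk].
have [/andP [s0 sn] [q Hq]] := @resinv_spec c a n n0 co.
move: s0 sn Hq; set s := resinv c a n => s0 sn Hq.
have : (n %| (s - r) * a)%Z by apply/dvdzP; exists (q - k); lia.
rewrite Gauss_dvdzl; last by rewrite coprimez_sym.
move=> /dvdzP [j Hj].
have : j = 0 by nia.
move=> j0; rewrite j0 mul0r in Hj; lia.
Qed.

Lemma mem2_sym p q k : mem2 p q k -> mem2 q p k.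
Proof. by move=> [x [y E]]; exists y, x; lia. Qed.

Lemma notinS2 p q k : ~ inS2 p q k%:Z -> ~ mem2 p q k.
Proof. by move=> H [x [y E]]; apply: H; exists x, y; rewrite E. Qed.

Arguments minimal_sym {a b c ci}.
Arguments minimal_rel {a b c ci}.
Arguments mem2_sym {p q k}.
Arguments coprimez_nat {a b}.

Lemma partB (n1 n2 n3 c1 c2 c3 : nat) :
  (0 < n3)%N -> (0 < n2)%N -> (0 < n1)%N ->
  coprime n1 n2 -> coprime n1 n3 -> coprime n2 n3 ->
  ~ mem2 n2 n3 n1 -> ~ mem2 n1 n3 n2 -> ~ mem2 n1 n2 n3 ->
  minimal n1 n2 n3 c1 -> minimal n2 n1 n3 c2 -> minimal n3 n1 n2 c3 ->
  is_frobenius n1 n2 n3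
    (c1%:Z * n1%:Z + Num.max (resinv (c2%:Z * n2%:Z) n3%:Z n1%:Z * n3%:Z)
                            (resinv (c3%:Z * n3%:Z) n2%:Z n1%:Z * n2%:Z)
     - n1%:Z - n2%:Z - n3%:Z).
Proof.
move=> n30 n20 n10 co12 co13 co23 nm1 nm2 nm3 M1 M2 M3.
have co21 : coprime n2 n1 by rewrite coprime_sym.
have co31 : coprime n3 n1 by rewrite coprime_sym.
have co32 : coprime n3 n2 by rewrite coprime_sym.
have M1' := minimal_sym M1.
have M2' := minimal_sym M2.
have M3' := minimal_sym M3.
have [r12 [r13 E1]] := minimal_rel M1.
have [r21 [r23 E2]] := minimal_rel M2.
have [r31 [r32 E3]] := minimal_rel M3.
have p12 := @pos_r n1 n2 n3 c1 r12 r13 n30 co13 nm2 M1 E1.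
have p13 := @pos_r n1 n3 n2 c1 r13 r12 n20 co12 nm3 M1' ltac:(lia).
have p21 := @pos_r n2 n1 n3 c2 r21 r23 n30 co23 nm1 M2 E2.
have p23 := @pos_r n2 n3 n1 c2 r23 r21 n10 co21 (fun h => nm3 (mem2_sym h)) M2' ltac:(lia).
have p31 := @pos_r n3 n1 n2 c3 r31 r32 n20 co32 (fun h => nm1 (mem2_sym h)) M3 E3.
have p32 := @pos_r n3 n2 n1 c3 r32 r31 n10 co31 (fun h => nm2 (mem2_sym h)) M3' ltac:(lia).
have l13 := @lt_r n1 n3 n2 c1 c3 r13 r12 r31 r32 M1' ltac:(lia) E3 p31 p12 n20.
have l12 := @lt_r n1 n2 n3 c1 c2 r12 r13 r21 r23 M1 E1 E2 p21 p13 n30.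
have l21 := @lt_r n2 n1 n3 c2 c1 r21 r23 r12 r13 M2 E2 E1 p12 p23 n30.
have l23 := @lt_r n2 n3 n1 c2 c3 r23 r21 r32 r31 M2' ltac:(lia) ltac:(lia) p32 p21 n10.
have l31 := @lt_r n3 n1 n2 c3 c1 r31 r32 r13 r12 M3 E3 ltac:(lia) p13 p32 n20.
have l32 := @lt_r n3 n2 n1 c3 c2 r32 r31 r23 r21 M3' ltac:(lia) ltac:(lia) p23 p31 n10.
have s2 := @sum_le n1 n2 n3 c1 c2 c3 r12 r13 r32 r31 M2 E1 E3 l31 l13 n10.
have s3 := @sum_le n1 n3 n2 c1 c3 c2 r13 r12 r23 r21 M3 ltac:(lia) E2 l21 l12 n10.
have s1 := @sum_le n2 n1 n3 c2 c1 c3 r21 r23 r31 r32 M1 E2 ltac:(lia) l32 l23 n20.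
have e2 : c2 = (r12 + r32)%N by nia.
have e3 : c3 = (r13 + r23)%N by nia.
have c3n1 := @min_int n3 n1 n2 c3 n1%:Z n3%:Z 0 M3 ltac:(lia) ltac:(lia) ltac:(lia) ltac:(lia).
have c2n1 := @min_int n2 n1 n3 c2 n1%:Z n2%:Z 0 M2 ltac:(lia) ltac:(lia) ltac:(lia) ltac:(lia).
have R23 : resinv (c2%:Z * n2%:Z) n3%:Z n1%:Z = r23%:Z.
  apply: resinv_eq; [lia | exact: coprimez_nat | lia | exists (- r21%:Z); lia].
have R32 : resinv (c3%:Z * n3%:Z) n2%:Z n1%:Z = r32%:Z.
  apply: resinv_eq; [lia | exact: coprimez_nat | lia | exists (- r31%:Z); lia].
rewrite R23 R32.
have W1 : (c2%:Z - 1) * n2%:Z + (r13%:Z - 1) * n3%:Z - n1%:Z =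
          c1%:Z * n1%:Z + r32%:Z * n2%:Z - n1%:Z - n2%:Z - n3%:Z by rewrite e2; lia.
have W2 : (r12%:Z - 1) * n2%:Z + (c3%:Z - 1) * n3%:Z - n1%:Z =
          c1%:Z * n1%:Z + r23%:Z * n3%:Z - n1%:Z - n2%:Z - n3%:Z by rewrite e3; lia.
split.
  move=> [a [b [d]]].
  case: (leP (r23%:Z * n3%:Z) (r32%:Z * n2%:Z)) => H Ed.
  - apply: (@notin n1 n2 n3 c1 c2 c3 r12 r13 M1 M2 M3 E1 l13 n10 n20 n30 a b d).
    lia.
  - apply: (@notin n1 n3 n2 c1 c3 c2 r13 r12 M1' M3 M2 ltac:(lia) l12 n10 n30 n20 a d b).
    lia.
move=> m Hm.
apply: (@above n1 n2 n3 c1 c2 c3 r12 r13 r21 r23 r31 r32 m n10 co21 E1 E2 E3 p21 p31).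
- by case: M1.
- rewrite W1; move: Hm; case: (leP (r23%:Z * n3%:Z) (r32%:Z * n2%:Z)); lia.
- rewrite W2; move: Hm; case: (leP (r23%:Z * n3%:Z) (r32%:Z * n2%:Z)); lia.
Qed.

Theorem mainTheorem5 (n1 n2 n3 : nat) :
  (0 < n3)%N -> (n3 < n2)%N -> (n2 < n1)%N ->
  coprime n1 n2 -> coprime n1 n3 -> coprime n2 n3 ->
  ~ inS2 n2 n3 n1%:Z -> ~ inS2 n1 n3 n2%:Z -> ~ inS2 n1 n2 n3%:Z ->
  let z1 := n1%:Z in let z2 := n2%:Z in let z3 := n3%:Z in
  let I1 := `|ceilz (resinv (- z3) z1 z2 * resinv z3 z2 z1) z3|%N in
  let I2 := `|ceilz (resinv (- z3) z2 z1 * resinv z3 z1 z2) z3|%N in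
  let I3 := `|ceilz (resinv (- z2) z3 z1 * resinv z2 z1 z3) z2|%N in
  let C1 := minOver I1 (fun a => a%:Z * z2
              - resinv (- z3) z1 z2 * ((a%:Z * z1) %/ resinv z3 z2 z1)%Z) in
  let C2 := minOver I2 (fun b => b%:Z * z1
              - resinv (- z3) z2 z1 * ((b%:Z * z2) %/ resinv z3 z1 z2)%Z) in
  let C3 := minOver I3 (fun g => g%:Z * z1
              - resinv (- z2) z3 z1 * ((g%:Z * z3) %/ resinv z2 z1 z3)%Z) in
  is_frobenius n1 n2 n3
    (C1 * z1 + Num.max (resinv (C2 * z2) z3 z1 * z3) (resinv (C3 * z3) z2 z1 * z2)
     - z1 - z2 - z3).
Proof.
move=> n30 n32 n21 c12 c13 c23 ni1 ni2 ni3 z1 z2 z3 I1 I2 I3 C1 C2 C3.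
have n31 : (1 < n3)%N.
  case: (ltnP 1 n3) => // h; exfalso; apply: ni2.
  exists 0%N, n2; have -> : n3 = 1%N by lia.
  by rewrite mul0n add0n muln1.
have [c1 [eC1 M1]] := @partA n1 n2 n3 ltac:(lia) n30 n32 ltac:(lia) c12 c13 c23.
have [c2 [eC2 M2]] := @partA n2 n1 n3 ltac:(lia) n30 ltac:(lia) ltac:(lia)
   ltac:(by rewrite coprime_sym) c23 c13.
have [c3 [eC3 M3]] := @partA n3 n1 n2 n31 ltac:(lia) n21 ltac:(lia)
   ltac:(by rewrite coprime_sym) ltac:(by rewrite coprime_sym) c12.
have -> : C1 = c1%:Z by exact: eC1.
have -> : C2 = c2%:Z by exact: eC2.
have -> : C3 = c3%:Z by exact: eC3.
apply: (@partB n1 n2 n3 c1 c2 c3) => //; try lia.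
- exact: notinS2.
- exact: notinS2.
- exact: notinS2.
Qed.
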